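(* Let $G$ be a group generated by $r$ elements, let $\pi:(0,1]\to(0,1]$ be a non-decreasing function with $\pi(\gamma)\to0$ as $\gamma\to0$, let $M=(\mu_n)_{n=1}^\infty$ be a sequence of probability measures on $G$ that detects index uniformly at rate $\pi$, and suppose that $\textup{dc}_M(G)\ge\alpha>0$. Then $G$ has an abelian subgroup of index bounded by a quantity depending only on $r$, $\pi$ and $\alpha$.
   Context: A sequence $M=(\mu_n)$ of probability measures on $G$ detects index uniformly at rate $\pi$ if for every $\varepsilon>0$ there exists $N=N(\varepsilon)\in\mathbb{N}$ such that for every $m\in\mathbb{N}$ and every subgroup $H$ of $G$ with $[G:H]\ge m$ (including infinite index) we have $\mu_n(H)\le\pi(\frac{1}{m})+\varepsilon$ for every $n\ge N$. For a probability measure $\mu$ on $G$, $\textup{dc}_\mu(G)=(\mu\times\mu)(\{(x,y):xy=yx\})$, and $\textup{dc}_M(G)=\limsup_{n\to\infty}\textup{dc}_{\mu_n}(G)$. *)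

(* Defs.v *)
From HB Require Import structures.
From mathcomp Require Import all_boot all_order all_algebra.
From mathcomp Require Import all_classical all_reals all_analysis.
Set Implicit Arguments. Unset Strict Implicit. Unset Printing Implicit Defensive.
Import Order.TTheory GRing.Theory Num.Theory.
Local Open Scope classical_set_scope.
Local Open Scope ring_scope.

Section GroupDefs.
Context {T : choiceType} (mul : T -> T -> T) (one : T) (inv : T -> T).

Definition is_group : Prop :=
  [/\ forall x y z, mul x (mul y z) = mul (mul x y) z,
      forall x, mul one x = x &
      forall x, mul (inv x) x = one].

Definition subgroup (H : set T) : Prop :=
  [/\ H one, forall x y, H x -> H y -> H (mul x y) & forall x, H x -> H (inv x)].

Definition abelian_set (H : set T) : Prop :=
  forall x y, H x -> H y -> mul x y = mul y x.

Definition generated_by_r (r : nat) : Prop :=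
  exists gens : 'I_r -> T,
    forall S : set T, subgroup S -> (forall i, S (gens i)) -> forall x, S x.

Definition index_le (H : set T) (k : nat) : Prop :=
  exists g : 'I_k -> T, forall x, exists i, H (mul (inv (g i)) x).

(* [G : H] >= m (possibly infinite), for m >= 1 *)
Definition index_ge (H : set T) (m : nat) : Prop := ~ index_le H m.-1.
End GroupDefs.

Section MeasureDefs.
Context {R : realType} {T : choiceType}.

(* a probability measure on the (countable, discrete) group, via its mass function *)
Definition mass (mu : T -> R) (A : set T) : \bar R := \esum_(x in A) (mu x)%:E.

Definition is_prob (mu : T -> R) : Prop :=
  (forall x, 0 <= mu x) /\ mass mu setT = 1%E.

Definition dc (mul : T -> T -> T) (mu : T -> R) : \bar R :=
  \esum_(p in [set p : T * T | mul p.1 p.2 = mul p.2 p.1]) (mu p.1 * mu p.2)%:E.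

Definition dcM (mul : T -> T -> T) (M : nat -> T -> R) : \bar R :=
  limn_esup (fun n => dc mul (M n)).

Definition detects_index_uniformly (mul : T -> T -> T) (one : T) (inv : T -> T)
    (M : nat -> T -> R) (pi : R -> R) : Prop :=
  forall eps : R, 0 < eps -> exists N : nat,
    forall (m : nat), (0 < m)%N ->
    forall H : set T, subgroup mul one inv H -> index_ge mul inv H m ->
    forall n, (N <= n)%N -> (mass (M n) H <= (pi (1 / m%:R) + eps)%:E)%E.
End MeasureDefs.

Definition rate_function {R : realType} (pi : R -> R) : Prop :=
  [/\ forall x, 0 < x <= 1 -> 0 < pi x <= 1,
      forall x y, 0 < x -> x <= y -> y <= 1 -> pi x <= pi y &
      pi x @[x --> 0^'+] --> 0].

(* Main.v *)
Require Import Defs.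
From mathcomp Require Import all_boot all_order all_algebra.
From mathcomp Require Import all_classical all_reals all_analysis.
Import Order.TTheory GRing.Theory Num.Theory.
Local Open Scope classical_set_scope.
Local Open Scope ring_scope.
From mathcomp Require Import lra.
Section Grp.
Context {T : choiceType} {mul : T -> T -> T} {one : T} {inv : T -> T}.
Context (HG : is_group mul one inv).

Lemma gA x y z : mul x (mul y z) = mul (mul x y) z.
Proof. by case: HG. Qed.
Lemma g1l x : mul one x = x.
Proof. by case: HG. Qed.
Lemma gVl x : mul (inv x) x = one.
Proof. by case: HG. Qed.
Lemma gVr x : mul x (inv x) = one.
Proof.
rewrite -[mul x _]g1l -[in mul one _](gVl (inv x)).
by rewrite -gA [mul (inv x) (mul x _)]gA gVl g1l gVl.
Qed.
Lemma g1r x : mul x one = x.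
Proof. by rewrite -(gVl x) gA gVr g1l. Qed.
Lemma gcancel x y z : mul x y = mul x z -> y = z.
Proof. by move=> h; rewrite -[y]g1l -(gVl x) -gA h gA gVl g1l. Qed.
Lemma gK x : inv (inv x) = x.
Proof. by apply: (gcancel (inv x)); rewrite gVr gVl. Qed.
Lemma ginvM x y : inv (mul x y) = mul (inv y) (inv x).
Proof.
apply: (gcancel (mul x y)); rewrite gVr -gA [mul y (mul _ _)]gA gVr g1l gVr //.
Qed.
Lemma ginv1 : inv one = one.
Proof. by rewrite -[inv one]g1r gVl. Qed.

Definition Cen (x : T) : set T := [set y | mul x y = mul y x].

Lemma Cen_sub x : subgroup mul one inv (Cen x).
Proof.
split; rewrite /Cen /=.
- by rewrite g1l g1r.
- by move=> a b ha hb; rewrite gA ha -gA hb gA.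
- move=> a ha; rewrite -[RHS]g1r -(gVr a) gA -[mul (mul (inv a) x) a]gA ha.
  by rewrite gA gVl g1l.
Qed.

Lemma sub_inv_iff (H : set T) x : subgroup mul one inv H -> H (inv x) -> H x.
Proof. by case=> _ _ hi /hi; rewrite gK. Qed.

Lemma cos_sym {H : set T} {u v} : subgroup mul one inv H ->
  H (mul (inv u) v) -> H (mul (inv v) u).
Proof. by case=> _ _ hi /hi; rewrite ginvM gK. Qed.
Lemma cos_trans {H : set T} {u v w} : subgroup mul one inv H ->
  H (mul (inv u) v) -> H (mul (inv v) w) -> H (mul (inv u) w).
Proof.
case=> _ hm _ h1 h2; have := hm _ _ h1 h2.
by rewrite -gA [mul v (mul _ _)]gA gVr g1l.
Qed.
Lemma cos_left (H : set T) h u v :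
  H (mul (inv u) v) -> H (mul (inv (mul h u)) (mul h v)).
Proof. by rewrite ginvM -gA [mul (inv h) (mul h v)]gA gVl g1l. Qed.

Definition genset (X : set T) : set T :=
  [set y | forall S, subgroup mul one inv S -> X `<=` S -> S y].

Lemma genset_sub X : subgroup mul one inv (genset X).
Proof.
split.
- by move=> S [].
- move=> a b ha hb S hS XS.
  by case: (hS) => _ hm _; apply: hm; [apply: ha|apply: hb].
- move=> a ha S hS XS.
  by case: (hS) => _ _ hi; apply: hi; apply: ha.
Qed.
Lemma genset_ge X : X `<=` genset X.
Proof. by move=> x Xx S _ XS; apply: XS. Qed.

Lemma index_fin (H : set T) (F : finType) (g : F -> T) :
  (forall x, exists i, H (mul (inv (g i)) x)) -> index_le mul inv H #|F|.
Proof.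
move=> hg; exists (fun i => g (enum_val i)) => x.
by case: (hg x) => i hi; exists (enum_rank i); rewrite enum_rankK.
Qed.

Lemma index_cap (A B : set T) a b :
  subgroup mul one inv A -> subgroup mul one inv B ->
  index_le mul inv A a -> index_le mul inv B b ->
  index_le mul inv (A `&` B) (a * b)%N.
Proof.
move=> sA sB [g hg] [l hl].
have [c hc] : exists c : 'I_a * 'I_b -> T, forall p,
   (exists y, A (mul (inv (g p.1)) y) /\ B (mul (inv (l p.2)) y)) ->
   A (mul (inv (g p.1)) (c p)) /\ B (mul (inv (l p.2)) (c p)).
  have := @choice ('I_a * 'I_b)%type T (fun p c =>
   (exists y, A (mul (inv (g p.1)) y) /\ B (mul (inv (l p.2)) y)) ->
   A (mul (inv (g p.1)) c) /\ B (mul (inv (l p.2)) c)).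
  case=> [p|f hf]; last by exists f.
  case: (pselect (exists y, A (mul (inv (g p.1)) y) /\ B (mul (inv (l p.2)) y))).
    by case=> y hy; exists y.
  by move=> hn; exists one.
have -> : (a * b)%N = #|{: 'I_a * 'I_b}| by rewrite card_prod !card_ord.
apply: index_fin (c) _ => x.
case: (hg x) => i hi; case: (hl x) => j hj.
exists (i, j); have [h1 h2] := hc (i, j) (ex_intro _ x (conj hi hj)).
split.
- exact: cos_trans sA (cos_sym sA h1) hi.
- exact: cos_trans sB (cos_sym sB h2) hj.
Qed.
End Grp.
Section Act.
Context {T : choiceType} (mul : T -> T -> T) (one : T) (inv : T -> T).
Context (HG : is_group mul one inv).
Context (H : set T) (sH : subgroup mul one inv H) (k : nat) (g : 'I_k -> T).
Context (hg : forall x, exists i, H (mul (inv (g i)) x)).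

Definition cpred (y : T) : pred 'I_k := fun j => `[< H (mul (inv (g j)) y) >].

Definition act (h : T) (i : 'I_k) : 'I_k := odflt i [pick j | cpred (mul h (g i)) j].

Lemma cpred_cos v w : H (mul (inv v) w) -> [pick j | cpred v j] = [pick j | cpred w j].
Proof.
move=> hvw; apply: eq_pick => j; rewrite /cpred.
apply/asboolP/asboolP => h.
- exact (cos_trans HG sH h hvw).
- exact (cos_trans HG sH h (cos_sym HG sH hvw)).
Qed.

Lemma act_pick h i : [pick j | cpred (mul h (g i)) j] = Some (act h i).
Proof.
rewrite /act; case: pickP => [j //|none].
by case: (hg (mul h (g i))) => j hj; move: (none j); rewrite /cpred; move/asboolP.
Qed.

Lemma act_spec h i : H (mul (inv (g (act h i))) (mul h (g i))).
Proof.
by have := act_pick h i; case: pickP => // j /asboolP hj [<-].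
Qed.

Lemma act_mul h h' i : act (mul h h') i = act h (act h' i).
Proof.
have e : [pick j | cpred (mul h (g (act h' i))) j] = [pick j | cpred (mul (mul h h') (g i)) j].
  apply: cpred_cos; rewrite -(gA HG); apply: (cos_left HG H).
  exact: act_spec.
by move: e; rewrite !act_pick => -[->].
Qed.

Lemma act_ker h : (forall i, act h i = act one i) -> H h.
Proof.
move=> e; case: (hg one) => i0; rewrite (g1r HG) => h0.
have Hg0 : H (g i0) by exact: (sub_inv_iff HG H _ sH h0).
have s1 := act_spec one i0; have s2 := act_spec h i0.
rewrite e (g1l HG) in s2 s1.
have h3 := cos_trans HG sH (cos_sym HG sH s1) s2.
case: sH => _ hm hi.
have h4 : H (mul h (g i0)) by rewrite -[mul h _](g1l HG) -((gVr HG) (g i0)) -(gA HG); apply: hm.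
by rewrite -[h](g1r HG) -((gVr HG) (g i0)) (gA HG); apply: hm => //; apply: hi.
Qed.
End Act.

Lemma hom_agree {T : choiceType} (mul : T -> T -> T) (one : T) (inv : T -> T)
  (HG : is_group mul one inv) (r k : nat) (gens : 'I_r -> T)
  (hgen : forall S : set T, subgroup mul one inv S -> (forall i, S (gens i)) -> forall x, S x)
  (a b : T -> 'I_k -> 'I_k) :
  (forall h h' i, a (mul h h') i = a h (a h' i)) ->
  (forall h h' i, b (mul h h') i = b h (b h' i)) ->
  (forall i, a one i = b one i) ->
  (forall t i, a (gens t) i = b (gens t) i) ->
  (forall t i, a (inv (gens t)) i = b (inv (gens t)) i) ->
  forall h i, a h i = b h i.
Proof.
move=> am bm a1 ag agi h.
pose S := [set h | (forall i, a h i = b h i) /\ (forall i, a (inv h) i = b (inv h) i)].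
suff: S h by case.
apply: hgen; last by move=> t; split; [apply: ag|apply: agi].
split.
- by split => // i; rewrite (ginv1 HG).
- move=> u v [hu hu'] [hv hv']; split => i.
    by rewrite am bm hv hu.
  by rewrite (ginvM HG) am bm hu' hv'.
- by move=> u [hu hu']; split => i; rewrite ?(gK HG).
Qed.
Section Meas.
Context {R : realType} {T : choiceType}.
Local Open Scope ereal_scope.

Lemma esum_scale (A : set T) (f : T -> R) (c b : R) : (0 <= c)%R ->
  (forall y, 0 <= f y)%R -> \esum_(y in A) (f y)%:E <= b%:E ->
  \esum_(y in A) (c * f y)%:E <= (c * b)%:E.
Proof.
move=> c0 f0 hb; apply: ge_ereal_sup => _ [X [finX XA] <-].
have : \sum_(i \in X) (f i)%:E <= b%:E.
  apply: le_trans hb; apply: ereal_sup_ubound; exists X => //.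
rewrite !fsumEFin // !lee_fin => hs.
rewrite -fsbig_distrr //=.
by apply: ler_wpM2l.
Qed.

Lemma mass_mono (mu : T -> R) (A B : set T) : A `<=` B -> mass mu A <= mass mu B.
Proof.
move=> AB; apply: ereal_sup_le => _ [X [finX XA] <-]; exists X => //.
by split => // x /XA /AB.
Qed.

Lemma limn_esup_le_ev (u : (\bar R)^nat) (c : \bar R) N :
  (forall n, (N <= n)%N -> u n <= c) -> limn_esup u <= c.
Proof.
move=> hu; rewrite limn_esup_lim.
apply: lime_le; first exact: is_cvg_esups.
near=> n; apply: ge_ereal_sup => _ [m /= nm <-]; apply: hu.
apply: leq_trans nm; near: n; by exists N.
Unshelve. all: by end_near.
Qed.
End Meas.
Section DCB.
Context {R : realType} {T : choiceType}.
Local Open Scope ereal_scope.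

Lemma dc_bound (mul : T -> T -> T) (mu : T -> R) (X : set T) (c : R) :
  is_prob mu -> (0 <= c)%R ->
  (forall x, ~ X x -> mass mu [set y | mul x y = mul y x] <= c%:E) ->
  dc mul mu <= mass mu X + c%:E.
Proof.
move=> [mu0 mu1] c0 hc.
rewrite /dc.
have -> : [set p : T * T | mul p.1 p.2 = mul p.2 p.1] =
   setT `*`` (fun x => [set y | mul x y = mul y x]).
  by apply/seteqP; split => p /=; [move=> h; split|case].
rewrite -(esum_esum (a := fun x y => (mu x * mu y)%:E)); last by move=> i j _ _; rewrite lee_fin mulr_ge0.
apply: (@le_trans _ _ (\esum_(x in setT)
    ((mu x * (if x \in X then 1 else 0)) + c * mu x)%:E)).
  apply: le_esum => x _.
  pose w := if x \in X then 1%R else c.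
  apply: (@le_trans _ _ (mu x * w)%:E).
    apply: esum_scale => //.
    rewrite /w; case: ifPn => [_|]; last by rewrite notin_setE => /hc.
    by rewrite -mu1; apply: mass_mono.
  rewrite lee_fin /w; case: ifPn => _.
    by rewrite mulr1 lerDl mulr_ge0.
  by rewrite mulr0 add0r mulrC.
rewrite (eq_esum (b := fun x => (mu x * (if x \in X then 1 else 0))%:E + (c * mu x)%:E)); last first.
  by move=> x _; rewrite EFinD.
rewrite esumD; last 2 first.
- by move=> x _; rewrite lee_fin; case: ifP; rewrite ?mulr1 ?mulr0.
- by move=> x _; rewrite lee_fin mulr_ge0.
apply: leeD.
  rewrite /mass [in leRHS]esum_mkcond.
  by apply: le_esum => x _; case: ifP; rewrite ?mulr1 ?mulr0.
rewrite -[c in leRHS]mulr1; apply: esum_scale => //.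
by move: mu1; rewrite /mass => ->.
Qed.
End DCB.
Lemma get_k (R : realType) (pi : R -> R) (a : R) : 0 < a ->
  pi x @[x --> 0^'+] --> 0 -> exists k : nat, (0 < k)%N /\ pi (1 / k%:R) < a.
Proof.
move=> a0 hl.
have := @cvgr_lt R _ _ _ pi 0 hl a a0.
case=> e /= e0 he.
have [k hk] : exists k : nat, e^-1 < k%:R.
  by exists (Num.truncn e^-1).+1; rewrite truncnS_gt.
have k0 : (0 < k)%N.
  by rewrite lt0n; apply/negP => /eqP k0; move: hk; rewrite k0 ltNge invr_ge0 ltW.
exists k; split => //; apply: he.
- rewrite /ball /= sub0r normrN ger0_norm ?div1r ?invr_ge0 //.
  by rewrite -(invrK e) ltf_pV2 ?posrE ?invr_gt0 ?ltr0n.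
- by rewrite div1r invr_gt0 ltr0n.
Qed.
Theorem theorem1p10 (R : realType) (r : nat) (pi : R -> R) (alpha : R) :
  rate_function pi -> 0 < alpha ->
  exists B : nat,
    forall (T : choiceType) (mul : T -> T -> T) (one : T) (inv : T -> T),
      is_group mul one inv -> generated_by_r mul one inv r ->
      forall M : nat -> T -> R,
        (forall n, is_prob (M n)) ->
        detects_index_uniformly mul one inv M pi ->
        (alpha%:E <= dcM mul M)%E ->
        exists H : set T,
          [/\ subgroup mul one inv H, abelian_set mul H & index_le mul inv H B].
Proof.
move=> [pi01 pimono pilim] a0.
have a8 : 0 < alpha / 8 by rewrite divr_gt0.
have [k [k0 hk]] := get_k _ _ _ a8 pilim.
pose k' := k.-1.
pose F := {ffun 'I_k' -> 'I_k'}.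
pose D := (F * {ffun 'I_r -> F} * {ffun 'I_r -> F})%type.
exists (#|{ffun D -> F}| * k')%N.
move=> T mul one inv HG [gens hgen] M Mp hdet hdc.
have [N hN] := hdet (alpha / 8) a8.
pose X := [set x | index_le mul inv (Cen (mul := mul) x) k'].
have hA : forall n, (N <= n)%N -> forall x, ~ X x ->
    (mass (M n) [set y | mul x y = mul y x] <= (alpha / 4)%:E)%E.
  move=> n hn x hx.
  apply: le_trans (hN k k0 _ (Cen_sub HG x) hx n hn) _.
  by rewrite lee_fin; lra.
have [n [hn hdcn]] : exists n, (N <= n)%N /\ ((alpha / 2)%:E < dc mul (M n))%E.
  apply/not_existsP => hno.
  have : (dcM mul M <= (alpha / 2)%:E)%E.
    apply: (@limn_esup_le_ev _ _ _ N) => n hn.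
    by rewrite leNgt; apply/negP => h; apply: (hno n); split.
  move=> h; have := le_trans hdc h; rewrite lee_fin; lra.
pose L := genset (mul := mul) (one := one) (inv := inv) X.
have hL : index_le mul inv L k'.
  apply/not_notP => hnL.
  have h1 := hN k k0 L (genset_sub X) hnL n hn.
  have h2 : (dc mul (M n) <= mass (M n) X + (alpha / 4)%:E)%E.
    by apply: dc_bound; [apply: Mp| lra| apply: hA].
  have h3 : (mass (M n) X <= mass (M n) L)%E by apply: mass_mono; apply: genset_ge.
  have h4 := lt_le_trans hdcn (le_trans h2 (leeD2r _ (le_trans h3 h1))).
  by move: h4; rewrite -EFinD lte_fin; lra.
have [reps hreps] : exists reps : T -> 'I_k' -> T, forall x, X x ->
    forall y, exists i, Cen (mul := mul) x (mul (inv (reps x i)) y).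
  have hex : forall x, exists g : 'I_k' -> T, X x ->
      forall y, exists i, Cen (mul := mul) x (mul (inv (g i)) y).
    move=> x; case: (pselect (X x)) => [[g hg]|hx]; first by exists g.
    by exists (fun _ => one).
  by have [f hf] := choice hex; exists f.
pose a x h i := act mul inv (Cen (mul := mul) x) k' (reps x) h i.
have amul : forall x, X x -> forall h h' i, a x (mul h h') i = a x h (a x h' i).
  by move=> x hx h h' i; exact: (act_mul _ _ _ HG _ (Cen_sub HG x) _ _ (hreps x hx)).
have aker : forall x, X x -> forall h, (forall i, a x h i = a x one i) -> mul x h = mul h x.
  by move=> x hx h hh; exact: (act_ker _ _ _ HG _ (Cen_sub HG x) _ _ (hreps x hx) h hh).
pose data x : D := ([ffun i => a x one i], [ffun t => [ffun i => a x (gens t) i]],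
   [ffun t => [ffun i => a x (inv (gens t)) i]]).
have [xd hxd] : exists xd : D -> T, forall d, (exists y, X y /\ data y = d) ->
    X (xd d) /\ data (xd d) = d.
  have hex : forall d, exists x, (exists y, X y /\ data y = d) -> X x /\ data x = d.
    move=> d; case: (pselect (exists y, X y /\ data y = d)) => [[y hy]|hnd].
      by exists y.
    by exists one.
  by have [f hf] := choice hex; exists f.
have agree : forall x, X x -> forall h i, a x h i = a (xd (data x)) h i.
  move=> x hx.
  have [hX' hd] := hxd (data x) (ex_intro _ x (conj hx erefl)).
  move: hd; rewrite /data => -[e1 e2 e3].
  apply: (hom_agree _ _ _ HG _ _ _ hgen); [exact: amul|exact: amul| | |].
  - by move=> i; have := congr1 (fun f : F => f i) e1; rewrite !ffunE.
  - move=> t i; have := congr1 (fun f : {ffun 'I_r -> F} => f t i) e2.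
    by rewrite !ffunE.
  - move=> t i; have := congr1 (fun f : {ffun 'I_r -> F} => f t i) e3.
    by rewrite !ffunE.
pose K0 := [set h | forall x, X x -> forall i, a x h i = a x one i].
have a1 : forall x, X x -> forall h i, a x h (a x one i) = a x h i.
  by move=> x hx h i; rewrite -amul // (g1r HG).
have sK0 : subgroup mul one inv K0.
  split.
  - by move=> x hx i.
  - move=> u v hu hv x hx i.
    by rewrite amul // hv // a1 // hu.
  - move=> u hu x hx i.
    have e1 := a1 x hx (inv u) i; have e2 := hu x hx i.
    have e3 := amul x hx (inv u) u i.
    by rewrite -[LHS]e1 -e2 -e3 (gVl HG) e2.
have iK0 : index_le mul inv K0 #|{ffun D -> F}|.
  pose Psi h : {ffun D -> F} := [ffun d => [ffun i => a (xd d) h i]].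
  have hex : forall v, exists c, (exists h, Psi h = v) -> Psi c = v.
    move=> v; case: (pselect (exists h, Psi h = v)) => [[h hh]|hnv].
      by exists h => _.
    by exists one.
  have [c hc] := choice hex.
    apply: index_fin (c) _ => y.
    exists (Psi y); have e := hc (Psi y) (ex_intro _ y erefl).
    move=> x hx i.
    have ey : a x y i = a x (c (Psi y)) i.
      rewrite (agree x hx y i) (agree x hx (c (Psi y)) i).
      have := congr1 (fun f : {ffun D -> F} => f (data x) i) e.
      by rewrite !ffunE.
    by rewrite amul // ey -amul // (gVl HG).
exists (K0 `&` L); split.
- case: sK0 => s1 s2 s3; case: (genset_sub (mul := mul) (one := one) (inv := inv) X) => l1 l2 l3.
  split.
  + by split.
  + by move=> u v [hu hu'] [hv hv']; split; [apply: s2|apply: l2].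
  + by move=> u [hu hu']; split; [apply: s3|apply: l3].
- move=> u v [hu _] [_ hv].
  have XC : X `<=` Cen (mul := mul) u.
    by move=> x hx; rewrite /Cen /=; apply/esym/aker => // i; apply: hu.
  exact: (hv _ (Cen_sub HG u) XC).
- exact: (index_cap HG _ _ _ _ sK0 (@genset_sub _ mul one inv X) iK0 hL).
Qed.
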